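(* Let $(\mathcal K,[\cdot,\cdot])$ be a Krein space and let $T$ be a closed, densely defined linear operator in $\mathcal K$ such that $\rho(T^{[*]}T)\neq\emptyset$ and $\rho(TT^{[*]})\neq\emptyset$. Then $$\sigma(T^{[*]}T)\setminus\{0\}=\sigma(TT^{[*]})\setminus\{0\},$$ and there exists a constant $C>0$ depending only on $T$ such that for all $\lambda,\mu\in\rho(T^{[*]}T)$ with $\lambda\neq0$, $$\|(T^{[*]}T-\lambda)^{-1}\|\le\frac{C\,M_1(\lambda)M_2(\mu)}{|\lambda|}\Big(|\mu|+|\lambda-\mu|\,(2+|\lambda|)(2+|\mu|)\Big),$$ where $M_1(\lambda):=\max\{1,\|(TT^{[*]}-\lambda)^{-1}\|\}$ and $M_2(\mu):=\max\{1,\|(T^{[*]}T-\mu)^{-1}\|\}$.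
   Context: $\mathcal K$ is equipped with a Banach norm $\|\cdot\|$ for which $[\cdot,\cdot]$ is continuous. $T^{[*]}$ is the Krein space adjoint of $T$; products have natural domains. For an operator $S$ in $\mathcal K$, $\rho(S)$ is the set of $\lambda\in\mathbb C$ with $S-\lambda:\operatorname{dom}S\to\mathcal K$ bijective and $(S-\lambda)^{-1}$ bounded; $\sigma(S)=\mathbb C\setminus\rho(S)$. *)

(* Defs.v *)
From Stdlib Require Import Reals ClassicalEpsilon.
Open Scope R_scope.

Record Cx := mkCx { Re : R; Im : R }.
Definition C0 : Cx := mkCx 0 0.
Definition C1 : Cx := mkCx 1 0.
Definition Cadd (a b : Cx) : Cx := mkCx (Re a + Re b) (Im a + Im b).
Definition Copp (a : Cx) : Cx := mkCx (- Re a) (- Im a).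
Definition Csub (a b : Cx) : Cx := Cadd a (Copp b).
Definition Cmul (a b : Cx) : Cx :=
  mkCx (Re a * Re b - Im a * Im b) (Re a * Im b + Im a * Re b).
Definition Cconj (a : Cx) : Cx := mkCx (Re a) (- Im a).
Definition Cabs (a : Cx) : R := sqrt (Re a ^ 2 + Im a ^ 2).

Definition cauchy_wrt {T} (d : T -> T -> R) (u : nat -> T) : Prop :=
  forall eps, 0 < eps -> exists N, forall n m, (N <= n)%nat -> (N <= m)%nat ->
    d (u n) (u m) < eps.
Definition conv_wrt {T} (d : T -> T -> R) (u : nat -> T) (l : T) : Prop :=
  forall eps, 0 < eps -> exists N, forall n, (N <= n)%nat -> d (u n) l < eps.

Definition is_subspace {T} (add : T -> T -> T) (zero : T) (scal : Cx -> T -> T)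
  (P : T -> Prop) : Prop :=
  P zero /\ (forall x y, P x -> P y -> P (add x y)) /\
  (forall a x, P x -> P (scal a x)).

(** * Krein spaces: a complex vector space with a hermitian sesquilinear form
    admitting a fundamental decomposition K = K+ [+] K- into a Hilbert space
    (K+, [.,.]) and an anti-Hilbert space (K-, -[.,.]); equipped moreover
    with a Banach norm for which [.,.] is continuous. *)
Record KreinSpace := {
  car :> Type;
  kadd : car -> car -> car;
  kzero : car;
  kopp : car -> car;
  kscal : Cx -> car -> car;
  kadd_assoc : forall x y z, kadd x (kadd y z) = kadd (kadd x y) z;
  kadd_comm : forall x y, kadd x y = kadd y x;
  kadd_0 : forall x, kadd x kzero = x;
  kadd_opp : forall x, kadd x (kopp x) = kzero;
  kscal_1 : forall x, kscal C1 x = x;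
  kscal_mul : forall a b x, kscal a (kscal b x) = kscal (Cmul a b) x;
  kscal_addv : forall a x y, kscal a (kadd x y) = kadd (kscal a x) (kscal a y);
  kscal_adds : forall a b x, kscal (Cadd a b) x = kadd (kscal a x) (kscal b x);
  form : car -> car -> Cx;
  form_add_l : forall x y z, form (kadd x y) z = Cadd (form x z) (form y z);
  form_scal_l : forall a x y, form (kscal a x) y = Cmul a (form x y);
  form_herm : forall x y, form y x = Cconj (form x y);
  knorm : car -> R;
  knorm_def : forall x, knorm x = 0 -> x = kzero;
  knorm_scal : forall a x, knorm (kscal a x) = Cabs a * knorm x;
  knorm_triangle : forall x y, knorm (kadd x y) <= knorm x + knorm y;
  knorm_complete : forall u : nat -> car,
    cauchy_wrt (fun x y => knorm (kadd x (kopp y))) u ->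
    exists l, conv_wrt (fun x y => knorm (kadd x (kopp y))) u l;
  form_continuous : exists M, forall x y, Cabs (form x y) <= M * knorm x * knorm y;
  fundamental_decomposition :
    exists Kp Km : car -> Prop,
      is_subspace kadd kzero kscal Kp /\ is_subspace kadd kzero kscal Km /\
      (forall x, exists xp xm, Kp xp /\ Km xm /\ x = kadd xp xm) /\
      (forall x, Kp x -> Km x -> x = kzero) /\
      (forall x y, Kp x -> Km y -> form x y = C0) /\
      (forall x, Kp x -> x <> kzero -> 0 < Re (form x x)) /\
      (forall x, Km x -> x <> kzero -> Re (form x x) < 0) /\
      (forall u : nat -> car, (forall n, Kp (u n)) ->
         cauchy_wrt (fun x y => sqrt (Re (form (kadd x (kopp y)) (kadd x (kopp y))))) u ->
         exists l, Kp l /\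
           conv_wrt (fun x y => sqrt (Re (form (kadd x (kopp y)) (kadd x (kopp y))))) u l) /\
      (forall u : nat -> car, (forall n, Km (u n)) ->
         cauchy_wrt (fun x y => sqrt (- Re (form (kadd x (kopp y)) (kadd x (kopp y))))) u ->
         exists l, Km l /\
           conv_wrt (fun x y => sqrt (- Re (form (kadd x (kopp y)) (kadd x (kopp y))))) u l)
}.

Arguments kadd {k}. Arguments kzero {k}. Arguments kopp {k}. Arguments kscal {k}.
Arguments form {k}. Arguments knorm {k}.

Definition kdist {K : KreinSpace} (x y : K) : R := knorm (kadd x (kopp y)).

(** * (Possibly unbounded) operators in K: a domain and an action on it.
    Values outside the domain are irrelevant. *)
Record Op (K : KreinSpace) := mkOp { dom : K -> Prop; app : K -> K }.
Arguments mkOp {K}. Arguments dom {K}. Arguments app {K}.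

Definition linear_op {K : KreinSpace} (T : Op K) : Prop :=
  is_subspace kadd kzero kscal (dom T) /\
  (forall x y, dom T x -> dom T y -> app T (kadd x y) = kadd (app T x) (app T y)) /\
  (forall a x, dom T x -> app T (kscal a x) = kscal a (app T x)).

Definition closed_op {K : KreinSpace} (T : Op K) : Prop :=
  forall (u : nat -> K) (x y : K), (forall n, dom T (u n)) ->
    conv_wrt kdist u x -> conv_wrt kdist (fun n => app T (u n)) y ->
    dom T x /\ app T x = y.

Definition densely_defined {K : KreinSpace} (T : Op K) : Prop :=
  forall x eps, 0 < eps -> exists y, dom T y /\ kdist x y < eps.

Definition kadj {K : KreinSpace} (T : Op K) : Op K :=
  mkOp (fun y => exists z, forall x, dom T x -> form (app T x) y = form x z)
       (fun y => epsilon (inhabits (@kzero K))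
                   (fun z => forall x, dom T x -> form (app T x) y = form x z)).

Definition opmul {K : KreinSpace} (A B : Op K) : Op K :=
  mkOp (fun x => dom B x /\ dom A (app B x)) (fun x => app A (app B x)).

Definition shift_app {K : KreinSpace} (S : Op K) (l : Cx) (x : K) : K :=
  kadd (app S x) (kopp (kscal l x)).

Definition in_resolvent {K : KreinSpace} (S : Op K) (l : Cx) : Prop :=
  (forall y, exists! x, dom S x /\ shift_app S l x = y) /\
  (exists M, forall x, dom S x -> knorm x <= M * knorm (shift_app S l x)).

Definition in_spectrum {K : KreinSpace} (S : Op K) (l : Cx) : Prop :=
  ~ in_resolvent S l.

Definition sup_of (P : R -> Prop) : R := epsilon (inhabits 0) (fun s => is_lub P s).

(** ||(S - lambda)^{-1}|| = sup { ||x|| : x in dom S, ||(S - lambda) x|| <= 1 } *)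
Definition resnorm {K : KreinSpace} (S : Op K) (l : Cx) : R :=
  sup_of (fun r => exists x, dom S x /\ knorm (shift_app S l x) <= 1 /\ r = knorm x).

(* Main.v *)
Require Import Defs.
From Stdlib Require Import Reals Lra Lia Psatz ClassicalEpsilon Classical.
Open Scope R_scope.

Lemma Cx_ext (a b : Cx) : Re a = Re b -> Im a = Im b -> a = b.
Proof. destruct a, b; simpl; intros -> ->; reflexivity. Qed.

Ltac ceq := apply Cx_ext; simpl; ring.

Definition rc (t : R) : Cx := mkCx t 0.
Definition Cinv (a : Cx) : Cx :=
  mkCx (Re a / (Re a ^ 2 + Im a ^ 2)) (- Im a / (Re a ^ 2 + Im a ^ 2)).

Lemma Cnz_pos (a : Cx) : a <> C0 -> 0 < Re a ^ 2 + Im a ^ 2.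
Proof.
  intros H. destruct (Req_dec (Re a) 0) as [h1|h1].
  - destruct (Req_dec (Im a) 0) as [h2|h2].
    + exfalso; apply H; apply Cx_ext; simpl; auto.
    + assert (0 < Im a * Im a) by (apply Rsqr_pos_lt; auto). simpl. nra.
  - assert (0 < Re a * Re a) by (apply Rsqr_pos_lt; auto). simpl. nra.
Qed.

Lemma Cmul_inv (a : Cx) : a <> C0 -> Cmul a (Cinv a) = Defs.C1.
Proof.
  intros H. pose proof (Cnz_pos a H). apply Cx_ext; unfold Cinv; simpl; field; lra.
Qed.

Lemma Cinv_mul (a : Cx) : a <> C0 -> Cmul (Cinv a) a = Defs.C1.
Proof.
  intros H. pose proof (Cnz_pos a H). apply Cx_ext; unfold Cinv; simpl; field; lra.
Qed.

Lemma Cabs_nonneg a : 0 <= Cabs a.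
Proof. unfold Cabs; apply sqrt_pos. Qed.

Lemma Cabs_sq a : Cabs a * Cabs a = Re a ^ 2 + Im a ^ 2.
Proof. unfold Cabs; apply sqrt_sqrt; nra. Qed.

Lemma Cabs_rc t : Cabs (rc t) = Rabs t.
Proof. unfold Cabs, rc; simpl. replace (t * (t * 1) + 0 * (0 * 1)) with (Rsqr t) by (unfold Rsqr; ring).
  apply sqrt_Rsqr_abs. Qed.

Lemma Cabs_C0 : Cabs C0 = 0.
Proof. unfold Cabs; simpl. replace (0 * (0 * 1) + 0 * (0 * 1)) with 0 by ring. apply sqrt_0. Qed.

Lemma Cabs_C1 : Cabs Defs.C1 = 1.
Proof. unfold Cabs; simpl. replace (1 * (1 * 1) + 0 * (0 * 1)) with 1 by ring. apply sqrt_1. Qed.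

Lemma Cabs_eq0 a : Cabs a = 0 -> a = C0.
Proof.
  intros H. pose proof (Cabs_sq a). rewrite H in H0.
  apply Cx_ext; simpl; nra.
Qed.

Lemma Cabs_mul a b : Cabs (Cmul a b) = Cabs a * Cabs b.
Proof.
  unfold Cabs. rewrite <- sqrt_mult by nra. f_equal. simpl. ring.
Qed.

Lemma sqrt_le_sqrt' x y : 0 <= x <= y -> sqrt x <= sqrt y.
Proof. intros; apply sqrt_le_1_alt; lra. Qed.

Lemma Cabs_Re a : Rabs (Re a) <= Cabs a.
Proof.
  unfold Cabs. rewrite <- sqrt_Rsqr_abs. apply sqrt_le_sqrt'. unfold Rsqr. split; nra.
Qed.

Lemma Cabs_Im a : Rabs (Im a) <= Cabs a.
Proof.
  unfold Cabs. rewrite <- sqrt_Rsqr_abs. apply sqrt_le_sqrt'. unfold Rsqr. split; nra.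
Qed.

Lemma Cabs_triangle a b : Cabs (Cadd a b) <= Cabs a + Cabs b.
Proof.
  pose proof (Cabs_nonneg a). pose proof (Cabs_nonneg b). pose proof (Cabs_nonneg (Cadd a b)).
  pose proof (Cabs_sq a). pose proof (Cabs_sq b). pose proof (Cabs_sq (Cadd a b)).
  simpl in H4.
  assert (Hcs : Re a * Re b + Im a * Im b <= Cabs a * Cabs b).
  { destruct (Rle_dec (Re a * Re b + Im a * Im b) 0). nra.
    assert ((Re a * Re b + Im a * Im b)^2 <= (Cabs a * Cabs b)^2).
    { replace ((Cabs a * Cabs b)^2) with ((Cabs a * Cabs a) * (Cabs b * Cabs b)) by ring.
      rewrite H2, H3. pose proof (pow2_ge_0 (Re a*Im b - Im a*Re b)). nra. }
    apply Rsqr_incr_0_var; [unfold Rsqr; simpl in H5; nra | nra]. }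
  apply Rsqr_incr_0_var; [unfold Rsqr | nra].
  replace (Cabs (Cadd a b) * Cabs (Cadd a b)) with ((Re a + Re b) ^ 2 + (Im a + Im b) ^ 2) by (rewrite H4; ring).
  replace ((Cabs a + Cabs b) * (Cabs a + Cabs b)) with (Cabs a * Cabs a + Cabs b * Cabs b + 2 * (Cabs a * Cabs b)) by ring.
  rewrite H2, H3. nra.
Qed.

Lemma Cabs_opp a : Cabs (Copp a) = Cabs a.
Proof. unfold Cabs; simpl; f_equal; ring. Qed.

Lemma Cabs_sub_sym a b : Cabs (Csub a b) = Cabs (Csub b a).
Proof. unfold Cabs, Csub; simpl; f_equal; ring. Qed.

Lemma Cabs_sub_le a b : Cabs (Csub a b) <= Cabs a + Cabs b.
Proof. unfold Csub. rewrite <- (Cabs_opp b). apply Cabs_triangle. Qed.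

Lemma Cabs_inv a : a <> C0 -> Cabs (Cinv a) = / Cabs a.
Proof.
  intros H. assert (Cabs a <> 0) by (intro h; apply H, Cabs_eq0, h).
  pose proof (Cmul_inv a H). apply (f_equal Cabs) in H1. rewrite Cabs_mul, Cabs_C1 in H1.
  field_simplify_eq; auto. lra.
Qed.

Lemma Cabs_pos a : a <> C0 -> 0 < Cabs a.
Proof. intros H. destruct (Cabs_nonneg a); auto. exfalso; apply H, Cabs_eq0; auto. Qed.

Notation "x '+v' y" := (kadd x y) (at level 50, left associativity).
Notation "'-v' x" := (kopp x) (at level 35, right associativity).

Section Vec.
Variable K : KreinSpace.
Implicit Types x y z : K.

Local Notation kz := (@kzero K).

Lemma kA x y z : x +v (y +v z) = (x +v y) +v z. Proof. apply kadd_assoc. Qed.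
Lemma kC x y : x +v y = y +v x. Proof. apply kadd_comm. Qed.
Lemma k0r x : x +v kz = x. Proof. apply kadd_0. Qed.
Lemma k0l x : kz +v x = x. Proof. rewrite kC; apply k0r. Qed.
Lemma kNr x : x +v -v x = kz. Proof. apply kadd_opp. Qed.
Lemma kNl x : -v x +v x = kz. Proof. rewrite kC; apply kNr. Qed.

Lemma kcancel z x y : z +v x = z +v y -> x = y.
Proof.
  intros H. apply (f_equal (fun w => -v z +v w)) in H.
  rewrite !kA, kNl, !k0l in H. exact H.
Qed.

Lemma ksame z : z +v z = z -> z = kz.
Proof. intros H. apply (kcancel z). rewrite k0r. exact H. Qed.

Lemma kscal0 x : kscal C0 x = kz.
Proof.
  apply ksame. rewrite <- kscal_adds. f_equal. ceq.
Qed.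

Lemma kscalz a : kscal a (@kzero K) = kz.
Proof.
  apply ksame. rewrite <- kscal_addv. rewrite k0r. reflexivity.
Qed.

Lemma kopp_scal x : -v x = kscal (mkCx (-1) 0) x.
Proof.
  apply (kcancel x). rewrite kNr. rewrite <- (kscal_1 K x) at 1.
  rewrite <- kscal_adds. rewrite <- (kscal0 x). f_equal. ceq.
Qed.

Lemma kopp0 : -v (@kzero K) = kz.
Proof. rewrite kopp_scal. apply kscalz. Qed.

Lemma koppK x : -v -v x = x.
Proof. apply (kcancel (-v x)). rewrite kNr, kNl. reflexivity. Qed.

Lemma koppD x y : -v (x +v y) = -v x +v -v y.
Proof. rewrite !kopp_scal. apply kscal_addv. Qed.

Lemma kscalN a x : kscal a (-v x) = -v kscal a x.
Proof. rewrite !kopp_scal, !kscal_mul. f_equal. ceq. Qed.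

Lemma kNscal a x : kscal (Copp a) x = -v kscal a x.
Proof. rewrite !kopp_scal, !kscal_mul. f_equal. ceq. Qed.

Lemma kscalB a b x : kscal (Csub a b) x = kscal a x +v -v kscal b x.
Proof. unfold Csub. rewrite kscal_adds, kNscal. reflexivity. Qed.

Lemma kscalD a x y : kscal a (x +v y) = kscal a x +v kscal a y.
Proof. apply kscal_addv. Qed.

Lemma kscalM a b x : kscal a (kscal b x) = kscal (Cmul a b) x.
Proof. apply kscal_mul. Qed.

Lemma ksub_eq x y : x +v -v y = kz -> x = y.
Proof. intros H. apply (kcancel (-v y)). rewrite kC, H, kNl. reflexivity. Qed.

Lemma kswap x y z : x +v (y +v z) = y +v (x +v z).
Proof. rewrite !kA, (kC x y). reflexivity. Qed.

Lemma ksub_chain x y z : (x +v -v y) +v (y +v -v z) = x +v -v z.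
Proof. rewrite <- kA, (kA (-v y)), kNl, k0l. reflexivity. Qed.

Lemma ksub_addsub x y u v : (x +v y) +v -v (u +v v) = (x +v -v u) +v (y +v -v v).
Proof. rewrite koppD. rewrite <- !kA. f_equal. apply kswap. Qed.

Lemma ksubK x y : x +v -v y +v y = x.
Proof. rewrite <- kA, kNl, k0r. reflexivity. Qed.

Lemma ksub_opp x y : -v (x +v -v y) = y +v -v x.
Proof. rewrite koppD, koppK, kC. reflexivity. Qed.

Lemma knorm0 : knorm (@kzero K) = 0.
Proof. rewrite <- (kscal0 kz), knorm_scal, Cabs_C0. ring. Qed.

Lemma knormN x : knorm (-v x) = knorm x.
Proof. rewrite kopp_scal, knorm_scal. unfold Cabs; simpl.
  replace (-1 * (-1 * 1) + 0 * (0 * 1)) with 1 by ring. rewrite sqrt_1. ring. Qed.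

Lemma knorm_nonneg x : 0 <= knorm x.
Proof.
  pose proof (knorm_triangle K x (-v x)). rewrite kNr, knorm0, knormN in H. lra.
Qed.

Lemma knorm_rc t x : knorm (kscal (rc t) x) = Rabs t * knorm x.
Proof. rewrite knorm_scal, Cabs_rc. reflexivity. Qed.

Lemma knorm_eq0 x : knorm x = 0 -> x = kz.
Proof. apply knorm_def. Qed.

Lemma knorm_sub_sym x y : knorm (x +v -v y) = knorm (y +v -v x).
Proof. rewrite <- ksub_opp, knormN. reflexivity. Qed.

Lemma kdist_tri x y z : knorm (x +v -v z) <= knorm (x +v -v y) + knorm (y +v -v z).
Proof. rewrite <- (ksub_chain x y z). apply knorm_triangle. Qed.

Lemma knorm_sub_le x y : knorm (x +v -v y) <= knorm x + knorm y.
Proof. rewrite <- (knormN y). apply knorm_triangle. Qed.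

Lemma knorm_rev x y : knorm x <= knorm (x +v -v y) + knorm y.
Proof. rewrite <- (ksubK x y) at 1. apply knorm_triangle. Qed.

End Vec.

Lemma le_eps (a c : R) : 0 <= c -> (forall eps, 0 < eps -> a <= c * eps) -> a <= 0.
Proof.
  intros Hc H. destruct (Rle_dec a 0) as [h|h]; auto. exfalso.
  assert (0 < a) by lra.
  specialize (H (a / (c + 1))). assert (0 < a / (c+1)) by (apply Rdiv_lt_0_compat; lra).
  specialize (H H1). assert (c * (a / (c+1)) < a).
  { unfold Rdiv. rewrite <- Rmult_assoc. apply (Rmult_lt_reg_r (c+1)); [lra|].
    rewrite Rmult_assoc, Rinv_l by lra. nra. }
  lra.
Qed.

Lemma Csub_eq0 a b : Csub a b = C0 -> a = b.
Proof. intros H. apply (f_equal Re) in H as H1. apply (f_equal Im) in H as H2.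
  simpl in *. apply Cx_ext; lra. Qed.

Section Form.
Variable K : KreinSpace.
Implicit Types x y z : K.
Local Notation kz := (@kzero K).

Lemma Cconj_add a b : Cconj (Cadd a b) = Cadd (Cconj a) (Cconj b).
Proof. ceq. Qed.
Lemma Cconj_conj a : Cconj (Cconj a) = a.
Proof. ceq. Qed.

Lemma form_add_r x y z : form x (y +v z) = Cadd (form x y) (form x z).
Proof.
  rewrite (form_herm K (y +v z) x), form_add_l, Cconj_add, <- !form_herm. reflexivity.
Qed.

Lemma form_scal_r a x y : form x (kscal a y) = Cmul (Cconj a) (form x y).
Proof.
  rewrite (form_herm K (kscal a y) x), form_scal_l, (form_herm K y x).
  destruct (form x y). ceq.
Qed.

Lemma form_z_l y : form kz y = C0.
Proof. rewrite <- (kscal0 K kz), form_scal_l. ceq. Qed.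

Lemma form_z_r x : form x kz = C0.
Proof. rewrite <- (kscal0 K kz), form_scal_r. ceq. Qed.

Lemma form_opp_r x y : form x (-v y) = Copp (form x y).
Proof. rewrite kopp_scal, form_scal_r. ceq. Qed.

Lemma form_sub_r x y z : form x (y +v -v z) = Csub (form x y) (form x z).
Proof. rewrite form_add_r, form_opp_r. reflexivity. Qed.

Lemma form_opp_l x y : form (-v x) y = Copp (form x y).
Proof. rewrite kopp_scal, form_scal_l. ceq. Qed.

Lemma form_sub_l x y z : form (x +v -v y) z = Csub (form x z) (form y z).
Proof. rewrite form_add_l, form_opp_l. reflexivity. Qed.

Lemma form_nondeg y : (forall x, form x y = C0) -> y = kz.
Proof.
  intros H.
  destruct (fundamental_decomposition K) as
    (Kp & Km & sp & sm & dec & _ & orth & pos & neg & _).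
  destruct (dec y) as (yp & ym & Hp & Hm & ->).
  assert (E1 : form yp yp = C0).
  { pose proof (H yp). rewrite form_add_r, (orth yp ym Hp Hm) in H0.
    rewrite <- H0. ceq. }
  assert (E2 : form ym ym = C0).
  { pose proof (H ym). rewrite form_add_r in H0.
    rewrite (form_herm K yp ym), (orth yp ym Hp Hm) in H0.
    rewrite <- H0. ceq. }
  assert (yp = kz).
  { apply NNPP; intro n. specialize (pos yp Hp n). rewrite E1 in pos. simpl in pos; lra. }
  assert (ym = kz).
  { apply NNPP; intro n. specialize (neg ym Hm n). rewrite E2 in neg. simpl in neg; lra. }
  subst. apply k0r.
Qed.

Lemma form_bound : exists M, 0 <= M /\ forall x y, Cabs (form x y) <= M * knorm x * knorm y.
Proof.
  destruct (form_continuous K) as [M HM]. exists (Rabs M). split; [apply Rabs_pos|].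
  intros x y. specialize (HM x y). pose proof (knorm_nonneg K x). pose proof (knorm_nonneg K y).
  assert (M * knorm x * knorm y <= Rabs M * knorm x * knorm y).
  { rewrite !Rmult_assoc. apply Rmult_le_compat_r. nra. apply Rle_abs. }
  lra.
Qed.

Lemma dense_form_zero (D : K -> Prop) y :
  (forall x eps, 0 < eps -> exists x', D x' /\ knorm (x +v -v x') < eps) ->
  (forall x, D x -> form x y = C0) -> forall x, form x y = C0.
Proof.
  intros Hd H x. destruct form_bound as (M & HM0 & HM).
  apply Cabs_eq0. apply Rle_antisym; [|apply Cabs_nonneg].
  apply (le_eps _ (M * knorm y)). { pose proof (knorm_nonneg K y); nra. }
  intros eps He. destruct (Hd x eps He) as (x' & Dx' & Hx').
  assert (form x y = form (x +v -v x') y).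
  { rewrite form_sub_l, (H x' Dx'). destruct (form x y); ceq. }
  rewrite H0. eapply Rle_trans; [apply HM|].
  pose proof (knorm_nonneg K y). pose proof (knorm_nonneg K (x +v -v x')).
  replace (M * eps * knorm y) with ((M * knorm y) * eps) by ring.
  replace (M * knorm (x +v -v x') * knorm y) with ((M * knorm y) * knorm (x +v -v x')) by ring.
  apply Rmult_le_compat_l; nra.
Qed.

Lemma adj_unique (T : Op K) z1 z2 : densely_defined T ->
  (forall x, dom T x -> form x z1 = form x z2) -> z1 = z2.
Proof.
  intros Hd H. apply ksub_eq. apply form_nondeg.
  apply (dense_form_zero (dom T)).
  - intros x eps He. destruct (Hd x eps He) as (x' & ? & ?). exists x'. split; auto.
  - intros x Dx. rewrite form_sub_r, H by auto. destruct (form x z2); ceq.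
Qed.

Lemma adj_spec (T : Op K) y : dom (kadj T) y ->
  forall x, dom T x -> form (app T x) y = form x (app (kadj T) y).
Proof.
  intros Hy. simpl. apply (epsilon_spec (inhabits kz) (fun z => forall x, dom T x -> form (app T x) y = form x z)).
  exact Hy.
Qed.

Lemma adj_char (T : Op K) y z : densely_defined T ->
  (forall x, dom T x -> form (app T x) y = form x z) ->
  dom (kadj T) y /\ app (kadj T) y = z.
Proof.
  intros Hd H. assert (D : dom (kadj T) y) by (exists z; exact H).
  split; auto. apply (adj_unique T); auto. intros x Dx. rewrite <- adj_spec; auto.
Qed.

Lemma adj_linear (T : Op K) : densely_defined T -> linear_op (kadj T).
Proof.
  intros Hd.
  assert (Hsp : forall y1 y2, dom (kadj T) y1 -> dom (kadj T) y2 ->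
            dom (kadj T) (y1 +v y2) /\ app (kadj T) (y1 +v y2) = app (kadj T) y1 +v app (kadj T) y2).
  { intros y1 y2 D1 D2. apply adj_char; auto. intros x Dx.
    rewrite !form_add_r, !adj_spec; auto. }
  assert (Hsc : forall a y, dom (kadj T) y ->
            dom (kadj T) (kscal a y) /\ app (kadj T) (kscal a y) = kscal a (app (kadj T) y)).
  { intros a y D. apply adj_char; auto. intros x Dx.
    rewrite !form_scal_r, !adj_spec; auto. }
  split; [split; [|split]|split].
  - exists kz. intros x _. rewrite form_z_r, form_z_r. reflexivity.
  - intros; apply Hsp; auto.
  - intros; apply Hsc; auto.
  - intros; apply Hsp; auto.
  - intros; apply Hsc; auto.
Qed.

Lemma adj_closed (T : Op K) : densely_defined T -> closed_op (kadj T).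
Proof.
  intros Hd u x y Du Cu Cy. apply adj_char; auto.
  intros v Dv. apply Csub_eq0. apply Cabs_eq0.
  destruct form_bound as (M & HM0 & HM).
  apply Rle_antisym; [|apply Cabs_nonneg].
  apply (le_eps _ (M * (knorm (app T v) + knorm v))).
  { pose proof (knorm_nonneg K v); pose proof (knorm_nonneg K (app T v)); nra. }
  intros eps He.
  destruct (Cu eps He) as [N1 HN1]. destruct (Cy eps He) as [N2 HN2].
  set (n := max N1 N2). specialize (HN1 n ltac:(lia)). specialize (HN2 n ltac:(lia)).
  unfold kdist in *.
  assert (E : Csub (form (app T v) x) (form v y) =
              Cadd (Copp (form (app T v) (u n +v -v x))) (form v (app (kadj T) (u n) +v -v y))).
  { rewrite !form_sub_r. rewrite <- (adj_spec T (u n) (Du n) v Dv).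
    destruct (form (app T v) x), (form (app T v) (u n)), (form v y). ceq. }
  rewrite E. eapply Rle_trans; [apply Cabs_triangle|]. rewrite Cabs_opp.
  pose proof (HM (app T v) (u n +v -v x)). pose proof (HM v (app (kadj T) (u n) +v -v y)).
  pose proof (knorm_nonneg K v); pose proof (knorm_nonneg K (app T v)).
  pose proof (knorm_nonneg K (u n +v -v x)). pose proof (knorm_nonneg K (app (kadj T) (u n) +v -v y)).
  assert (M * knorm (app T v) * knorm (u n +v -v x) <= M * knorm (app T v) * eps).
  { apply Rmult_le_compat_l; nra. }
  assert (M * knorm v * knorm (app (kadj T) (u n) +v -v y) <= M * knorm v * eps).
  { apply Rmult_le_compat_l; nra. }
  nra.
Qed.

End Form.

Section Geom.
Variable K : KreinSpace.
Local Notation kz := (@kzero K).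
Local Notation nd := (fun x y : K => knorm (x +v -v y)).

Lemma geom_bound (v : nat -> K) (C : R) :
  (forall k, knorm (v (S k) +v -v v k) <= C * (/2)^k) ->
  forall q d, knorm (v (q+d)%nat +v -v v q) <= 2*C*((/2)^q - (/2)^(q+d)).
Proof.
  intros H q d. induction d.
  - rewrite Nat.add_0_r, kNr, knorm0. lra.
  - replace (q + S d)%nat with (S (q + d)) by lia.
    eapply Rle_trans; [apply (kdist_tri K _ (v (q+d)%nat))|].
    rewrite <- tech_pow_Rmult. specialize (H (q+d)%nat). lra.
Qed.

Lemma half_pow_small eps : 0 < eps -> exists N, forall n, (N <= n)%nat -> (/2)^n < eps.
Proof.
  intros He. destruct (pow_lt_1_zero (/2) ltac:(rewrite Rabs_pos_eq; lra) eps He) as [N HN].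
  exists N. intros n Hn. specialize (HN n Hn). rewrite Rabs_pos_eq in HN; auto.
  apply pow_le; lra.
Qed.

Lemma half_pow_pos n : 0 < (/2)^n.
Proof. apply pow_lt; lra. Qed.

Lemma half_pow_le1 n : (/2)^n <= 1.
Proof. induction n; simpl; lra. Qed.

Lemma half_pow_le n m : (n <= m)%nat -> (/2)^m <= (/2)^n.
Proof.
  intros H. replace m with (n + (m - n))%nat by lia. rewrite pow_add.
  pose proof (half_pow_pos n). pose proof (half_pow_le1 (m-n)). nra.
Qed.

Lemma geom_cauchy (v : nat -> K) (C : R) : 0 <= C ->
  (forall k, knorm (v (S k) +v -v v k) <= C * (/2)^k) -> cauchy_wrt nd v.
Proof.
  intros HC H eps He.
  destruct (half_pow_small (eps / (4*C+1))) as [N HN].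
  { apply Rdiv_lt_0_compat; lra. }
  exists N. intros n m Hn Hm.
  pose proof (geom_bound v C H N (n - N)) as B1. pose proof (geom_bound v C H N (m - N)) as B2.
  replace (N + (n - N))%nat with n in B1 by lia. replace (N + (m - N))%nat with m in B2 by lia.
  pose proof (half_pow_pos n). pose proof (half_pow_pos m).
  specialize (HN N (le_n N)).
  eapply Rle_lt_trans; [apply (kdist_tri K _ (v N))|].
  rewrite (knorm_sub_sym K (v N)).
  assert (eps / (4 * C + 1) * (4*C+1) = eps) by (field; lra).
  assert (4*C*(/2)^N <= 4*C*(eps / (4 * C + 1))) by (apply Rmult_le_compat_l; lra).
  assert (0 < eps / (4 * C + 1)) by (apply Rdiv_lt_0_compat; lra).
  nra.
Qed.

Lemma lim_bound (u : nat -> K) l p B N0 :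
  conv_wrt nd u l -> (forall k, (N0 <= k)%nat -> knorm (u k +v -v p) <= B) -> knorm (l +v -v p) <= B.
Proof.
  intros Hc Hb.
  assert (knorm (l +v -v p) - B <= 0); [|lra].
  apply (le_eps _ 1); [lra|]. intros eps He.
  destruct (Hc eps He) as [N HN]. specialize (HN (max N N0) (Nat.le_max_l _ _)).
  pose proof (kdist_tri K l (u (max N N0)) p). rewrite (knorm_sub_sym K l (u (max N N0))) in H.
  specialize (Hb (max N N0) (Nat.le_max_r _ _)). lra.
Qed.

Lemma lim_exists (v : nat -> K) (C : R) : 0 <= C ->
  (forall k, knorm (v (S k) +v -v v k) <= C * (/2)^k) -> exists l, conv_wrt nd v l.
Proof. intros; apply knorm_complete; eapply geom_cauchy; eauto. Qed.

End Geom.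

Section ClosedGraph.
Variable K : KreinSpace.
Local Notation kz := (@kzero K).
Local Notation nd := (fun x y : K => knorm (x +v -v y)).
Variable F : K -> K.
Hypothesis HFa : forall x y, F (x +v y) = F x +v F y.
Hypothesis HFs : forall t x, F (kscal (rc t) x) = kscal (rc t) (F x).
Hypothesis HFc : forall (u : nat -> K) x y, conv_wrt nd u x -> conv_wrt nd (fun n => F (u n)) y -> F x = y.

Lemma F0 : F kz = kz.
Proof. apply ksame. rewrite <- HFa, k0r. reflexivity. Qed.

Lemma FN x : F (-v x) = -v F x.
Proof. apply (kcancel K (F x)). rewrite <- HFa, !kNr. apply F0. Qed.

Lemma Fsub x y : F (x +v -v y) = F x +v -v F y.
Proof. rewrite HFa, FN. reflexivity. Qed.

Definition Cl (n : R) (x : K) := forall eps, 0 < eps -> exists a, knorm (F a) <= n /\ knorm (x +v -v a) < eps.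

Definition bstep (k : nat) (cr : K * R) : K * R :=
  epsilon (inhabits (kz, 1)) (fun cr' =>
    knorm (fst cr' +v -v fst cr) < snd cr / 2 /\ 0 < snd cr' /\ snd cr' <= snd cr / 2 /\
    forall a, knorm (F a) <= INR k -> 2 * snd cr' <= knorm (fst cr' +v -v a)).

Fixpoint bseq (k : nat) : K * R :=
  match k with O => (kz, 1) | S k => bstep k (bseq k) end.

Lemma baire : exists n c r, 0 < r /\ forall x, knorm (x +v -v c) < r -> Cl n x.
Proof.
  apply NNPP. intros Hn.
  assert (Hst : forall k c r, 0 < r -> exists cr',
    knorm (fst cr' +v -v c) < r / 2 /\ 0 < snd cr' /\ snd cr' <= r / 2 /\
    forall a, knorm (F a) <= INR k -> 2 * snd cr' <= knorm (fst cr' +v -v a)).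
  { intros k c r Hr. apply NNPP. intros Hne. apply Hn. exists (INR k), c, (r/2). split; [lra|].
    intros x Hx. apply NNPP. intros Hcl. unfold Cl in Hcl.
    apply not_all_ex_not in Hcl. destruct Hcl as [eps Heps].
    apply imply_to_and in Heps. destruct Heps as [He Hno].
    apply Hne. exists (x, Rmin eps r / 2). simpl. repeat split.
    - lra.
    - pose proof (Rmin_glb_lt eps r 0 He Hr). lra.
    - pose proof (Rmin_r eps r). lra.
    - intros a Ha. apply Rnot_lt_le. intros Hlt. apply Hno. exists a. split; auto.
      pose proof (Rmin_l eps r). lra. }
  assert (Hbs : forall k cr, 0 < snd cr ->
     knorm (fst (bstep k cr) +v -v fst cr) < snd cr / 2 /\ 0 < snd (bstep k cr) /\
     snd (bstep k cr) <= snd cr / 2 /\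
     forall a, knorm (F a) <= INR k -> 2 * snd (bstep k cr) <= knorm (fst (bstep k cr) +v -v a)).
  { intros k cr Hcr. destruct (Hst k (fst cr) (snd cr) Hcr) as [x Hx].
    unfold bstep. apply (epsilon_spec (inhabits (kz, 1)) (fun cr' => knorm (fst cr' +v -v fst cr) < snd cr / 2 /\ 0 < snd cr' /\ snd cr' <= snd cr / 2 /\ forall a, knorm (F a) <= INR k -> 2 * snd cr' <= knorm (fst cr' +v -v a))).
    exists x; exact Hx. }
  set (c := fun k => fst (bseq k)). set (r := fun k => snd (bseq k)).
  assert (Hpos : forall k, 0 < r k).
  { intros k; induction k. unfold r; simpl; lra. unfold r in *; simpl. apply Hbs; auto. }
  assert (Hinv : forall k, 0 < r k /\ knorm (c (S k) +v -v c k) < r k / 2 /\ r (S k) <= r k / 2 /\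
      forall a, knorm (F a) <= INR k -> 2 * r (S k) <= knorm (c (S k) +v -v a)).
  { intros k. split; auto. unfold c, r; simpl. destruct (Hbs k (bseq k) (Hpos k)) as (h1&h2&h3&h4). auto. }
  assert (Hr0 : forall k, r k <= (/2)^k).
  { intros k; induction k. unfold r; simpl; lra. destruct (Hinv k) as (_&_&?&_). simpl. lra. }
  assert (Hrd : forall q d, r (q + d)%nat <= r q * (/2)^d).
  { intros q d; induction d. rewrite Nat.add_0_r; simpl; lra.
    replace (q + S d)%nat with (S (q+d)) by lia. destruct (Hinv (q+d)%nat) as (_&_&?&_). simpl.
    pose proof (Hinv q) as [? _]. nra. }
  assert (Hcd : forall q d, knorm (c (q + d)%nat +v -v c q) <= r q * (1 - (/2)^d)).
  { intros q d; induction d. rewrite Nat.add_0_r, kNr, knorm0; simpl; lra.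
    replace (q + S d)%nat with (S (q+d)) by lia.
    eapply Rle_trans; [apply (kdist_tri K _ (c (q+d)%nat))|].
    destruct (Hinv (q+d)%nat) as (_&?&_&_). specialize (Hrd q d). simpl. lra. }
  destruct (lim_exists K c (1/2)) as [l Hl]. lra.
  { intros k. destruct (Hinv k) as (_&?&_&_). specialize (Hr0 k). lra. }
  destruct (INR_unbounded (knorm (F l))) as [N HN].
  assert (Hlc : knorm (l +v -v c (S N)) <= r (S N)).
  { apply (lim_bound K c l (c (S N)) (r (S N)) (S N) Hl). intros k Hk.
    replace k with (S N + (k - S N))%nat by lia. specialize (Hcd (S N) (k - S N)%nat).
    pose proof (half_pow_pos (k - S N)). pose proof (Hinv (S N)) as [? _]. nra. }
  destruct (Hinv N) as (_&_&_&Hb). specialize (Hb l ltac:(lra)).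
  rewrite (knorm_sub_sym K) in Hb. pose proof (Hinv (S N)) as [? _]. lra.
Qed.

Lemma Cl_mono n1 n2 x : n1 <= n2 -> Cl n1 x -> Cl n2 x.
Proof. intros H Hc eps He. destruct (Hc eps He) as (a & ? & ?). exists a. split; auto; lra. Qed.

Lemma kscal_rc_rc s t (x : K) : kscal (rc s) (kscal (rc t) x) = kscal (rc (s * t)) x.
Proof. rewrite kscal_mul. f_equal. unfold rc; ceq. Qed.

Lemma kscal_rc_sub s (x y : K) : kscal (rc s) x +v -v kscal (rc s) y = kscal (rc s) (x +v -v y).
Proof. rewrite kscalD, kscalN. reflexivity. Qed.

Lemma Cl_scale m s y : 0 < s -> Cl m y -> Cl (s * m) (kscal (rc s) y).
Proof.
  intros Hs Hc eps He. destruct (Hc (eps / s) ltac:(apply Rdiv_lt_0_compat; lra)) as (a & Ha & Hy).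
  exists (kscal (rc s) a). rewrite HFs, knorm_rc, kscal_rc_sub, knorm_rc, Rabs_pos_eq by lra.
  split. apply Rmult_le_compat_l; lra.
  apply (Rmult_lt_compat_l s) in Hy; auto. replace (s * (eps / s)) with eps in Hy by (field; lra). lra.
Qed.

Lemma alg1 (c y : K) : (c +v y) +v -v (c +v -v y) = y +v y.
Proof. rewrite ksub_addsub, kNr, k0l, koppK. reflexivity. Qed.

Lemma alg2 (x1 x2 a1 a2 : K) : (x1 +v -v x2) +v -v (a1 +v -v a2) = (x1 +v -v a1) +v -v (x2 +v -v a2).
Proof. rewrite ksub_addsub. f_equal. rewrite koppD. reflexivity. Qed.

Lemma half_half (z : K) : kscal (rc (1/2)) z +v kscal (rc (1/2)) z = z.
Proof. rewrite <- kscal_adds. rewrite <- (kscal_1 K z) at 2. f_equal. unfold rc; apply Cx_ext; simpl; field. Qed.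

Lemma addK1 (c y : K) : (c +v y) +v -v c = y.
Proof. rewrite (kC K c y), <- kA, kNr, k0r. reflexivity. Qed.

Lemma ball0 : exists m rho, 0 <= m /\ 0 < rho /\ forall y, knorm y < rho -> Cl m y.
Proof.
  destruct baire as (n & c & r & Hr & Hb).
  exists (2 * Rabs n), (2 * r). split. pose proof (Rabs_pos n); lra. split. lra.
  intros z Hz. set (y := kscal (rc (1/2)) z).
  assert (Hy : knorm y < r). { unfold y. rewrite knorm_rc, Rabs_pos_eq by lra. lra. }
  assert (C1' : Cl (Rabs n) (c +v y)).
  { apply (Cl_mono n); [apply Rle_abs|]. apply Hb. rewrite addK1. auto. }
  assert (C2' : Cl (Rabs n) (c +v -v y)).
  { apply (Cl_mono n); [apply Rle_abs|]. apply Hb. rewrite addK1, knormN. auto. }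
  rewrite <- (half_half z). fold y. rewrite <- (alg1 c y).
  intros eps He. destruct (C1' (eps/2) ltac:(lra)) as (a1 & Ha1 & Hx1).
  destruct (C2' (eps/2) ltac:(lra)) as (a2 & Ha2 & Hx2).
  exists (a1 +v -v a2). rewrite Fsub, alg2. split.
  - eapply Rle_trans; [apply knorm_sub_le|]. lra.
  - eapply Rle_lt_trans; [apply knorm_sub_le|]. lra.
Qed.

Lemma approx m rho k y : 0 < rho -> (forall y, knorm y < rho -> Cl m y) ->
  knorm y < rho * (/2)^k -> Cl (m * (/2)^k) y.
Proof.
  intros Hr Hb Hy.
  pose proof (half_pow_pos k) as Hp.
  assert (E : y = kscal (rc ((/2)^k)) (kscal (rc (2^k)) y)).
  { rewrite kscal_rc_rc. rewrite <- Rpow_mult_distr. replace (/2 * 2) with 1 by field.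
    rewrite pow1. symmetry; apply (kscal_1 K). }
  rewrite E, Rmult_comm. apply Cl_scale; auto. apply Hb.
  rewrite knorm_rc, Rabs_pos_eq by (apply pow_le; lra).
  apply (Rmult_lt_compat_l (2^k)) in Hy; [|apply pow_lt; lra].
  replace (2 ^ k * (rho * (/ 2) ^ k)) with (rho * (2 * /2)^k) in Hy by (rewrite Rpow_mult_distr; ring).
  replace (2 * /2) with 1 in Hy by field. rewrite pow1 in Hy. lra.
Qed.

Section Iter.
Variables (m rho : R) (y : K).
Hypothesis Hm : 0 <= m.
Hypothesis Hrho : 0 < rho.
Hypothesis Hball : forall y, knorm y < rho -> Cl m y.
Hypothesis Hy : knorm y < rho.

Definition istep (k : nat) (e : K) : K :=
  epsilon (inhabits kz) (fun a => knorm (F a) <= m * (/2)^k /\ knorm (e +v -v a) < rho * (/2)^(S k)).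

Fixpoint eseq (k : nat) : K := match k with O => y | S k => eseq k +v -v istep k (eseq k) end.
Fixpoint sseq (k : nat) : K := match k with O => kz | S k => sseq k +v istep k (eseq k) end.

Lemma istep_spec k e : knorm e < rho * (/2)^k ->
  knorm (F (istep k e)) <= m * (/2)^k /\ knorm (e +v -v istep k e) < rho * (/2)^(S k).
Proof.
  intros He. pose proof (approx m rho k e Hrho Hball He) as Hc.
  assert (0 < rho * (/2)^(S k)) by (apply Rmult_lt_0_compat; [lra|apply half_pow_pos]).
  destruct (Hc _ H) as (a & Ha).
  unfold istep. apply (epsilon_spec (inhabits kz) (fun a => knorm (F a) <= m * (/2)^k /\ knorm (e +v -v a) < rho * (/2)^(S k))).
  exists a; exact Ha.
Qed.

Lemma eseq_small k : knorm (eseq k) < rho * (/2)^k.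
Proof. induction k. simpl; lra. simpl eseq. apply istep_spec; auto. Qed.

Lemma sseq_eseq k : sseq k +v eseq k = y.
Proof.
  induction k. simpl. apply k0l. simpl. rewrite <- IHk.
  rewrite <- kA. f_equal. rewrite (kswap K _ (eseq k)), kNr, k0r. reflexivity.
Qed.

Lemma sseq_conv : conv_wrt (fun x y : K => knorm (x +v -v y)) sseq y.
Proof.
  intros eps He. destruct (half_pow_small (eps / rho)) as [N HN]. apply Rdiv_lt_0_compat; lra.
  exists N. intros n Hn. rewrite <- (sseq_eseq n).
  rewrite koppD, kA, kNr, k0l, knormN.
  pose proof (eseq_small n). specialize (HN n Hn).
  apply (Rmult_lt_compat_l rho) in HN; auto. replace (rho * (eps / rho)) with eps in HN by (field; lra). lra.
Qed.

Lemma Fsseq_step k : knorm (F (sseq (S k)) +v -v F (sseq k)) <= m * (/2)^k.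
Proof.
  simpl. rewrite HFa, addK1. apply istep_spec. apply eseq_small.
Qed.

Lemma iter_bound : knorm (F y) <= 2 * m.
Proof.
  destruct (lim_exists K (fun k => F (sseq k)) m Hm Fsseq_step) as [z Hz].
  assert (F y = z) by (apply (HFc sseq); auto; apply sseq_conv).
  subst z.
  pose proof (lim_bound K (fun k => F (sseq k)) (F y) kz (2*m) 0 Hz) as Hb.
  rewrite kopp0, k0r in Hb. apply Hb. intros k _.
  pose proof (geom_bound K (fun k => F (sseq k)) m Fsseq_step 0 k) as G.
  simpl in G. rewrite F0 in G. rewrite kopp0, k0r in G.
  rewrite k0r. pose proof (half_pow_pos k). nra.
Qed.
End Iter.

Theorem closed_graph : exists M, forall x, knorm (F x) <= M * knorm x.
Proof.
  destruct ball0 as (m & rho & Hm & Hr & Hb).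
  exists (4 * m / rho). intros x.
  destruct (Req_dec (knorm x) 0) as [h|h].
  - apply knorm_eq0 in h. subst x. rewrite F0, knorm0. lra.
  - pose proof (knorm_nonneg K x). assert (0 < knorm x) by lra.
    set (t := rho / (2 * knorm x)).
    assert (Ht : 0 < t) by (unfold t; apply Rdiv_lt_0_compat; lra).
    assert (Hy : knorm (kscal (rc t) x) < rho).
    { rewrite knorm_rc, Rabs_pos_eq by lra. unfold t. field_simplify; lra. }
    pose proof (iter_bound m rho (kscal (rc t) x) Hm Hr Hb Hy) as B.
    rewrite HFs, knorm_rc, Rabs_pos_eq in B by lra.
    unfold t in B. unfold Rdiv.
    apply (Rmult_le_reg_l (rho / (2 * knorm x))). apply Rdiv_lt_0_compat; lra.
    replace (rho / (2 * knorm x) * (4 * m * / rho * knorm x)) with (2 * m) by (field; lra). lra.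
Qed.

End ClosedGraph.

Lemma sup_of_lub (P : R -> Prop) : (exists x, P x) -> (exists B, forall x, P x -> x <= B) ->
  is_lub P (sup_of P).
Proof.
  intros He [B HB]. unfold sup_of. apply epsilon_spec.
  destruct (completeness P) as [m Hm]; [exists B; exact HB | exact He |]. exists m; exact Hm.
Qed.

Section Ops.
Variable K : KreinSpace.
Local Notation kz := (@kzero K).
Implicit Types S A B : Op K.

Lemma lin_dom0 S : linear_op S -> dom S kz.
Proof. intros [[h _] _]; exact h. Qed.
Lemma lin_domD S x y : linear_op S -> dom S x -> dom S y -> dom S (x +v y).
Proof. intros [[_ [h _]] _]; auto. Qed.
Lemma lin_domZ S a x : linear_op S -> dom S x -> dom S (kscal a x).
Proof. intros [[_ [_ h]] _]; auto. Qed.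
Lemma lin_appD S x y : linear_op S -> dom S x -> dom S y -> app S (x +v y) = app S x +v app S y.
Proof. intros [_ [h _]]; auto. Qed.
Lemma lin_appZ S a x : linear_op S -> dom S x -> app S (kscal a x) = kscal a (app S x).
Proof. intros [_ [_ h]]; auto. Qed.
Lemma lin_domN S x : linear_op S -> dom S x -> dom S (-v x).
Proof. intros; rewrite kopp_scal; apply lin_domZ; auto. Qed.
Lemma lin_appN S x : linear_op S -> dom S x -> app S (-v x) = -v app S x.
Proof. intros; rewrite !kopp_scal; apply lin_appZ; auto. Qed.
Lemma lin_domB S x y : linear_op S -> dom S x -> dom S y -> dom S (x +v -v y).
Proof. intros; apply lin_domD; auto; apply lin_domN; auto. Qed.
Lemma lin_appB S x y : linear_op S -> dom S x -> dom S y -> app S (x +v -v y) = app S x +v -v app S y.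
Proof. intros; rewrite lin_appD, lin_appN; auto; apply lin_domN; auto. Qed.
Lemma lin_app0 S : linear_op S -> app S kz = kz.
Proof. intros H. apply ksame. rewrite <- lin_appD; auto using lin_dom0. rewrite k0r; auto. Qed.

Lemma opmul_linear A B : linear_op A -> linear_op B -> linear_op (opmul A B).
Proof.
  intros HA HB. split; [split; [|split]|split]; simpl.
  - split. apply lin_dom0; auto. rewrite lin_app0; auto. apply lin_dom0; auto.
  - intros x y [Dx Dx'] [Dy Dy']. split. apply lin_domD; auto. rewrite lin_appD; auto. apply lin_domD; auto.
  - intros a x [Dx Dx']. split. apply lin_domZ; auto. rewrite lin_appZ; auto. apply lin_domZ; auto.
  - intros x y [Dx Dx'] [Dy Dy']. rewrite lin_appD, lin_appD; auto.
  - intros a x [Dx Dx']. rewrite lin_appZ, lin_appZ; auto.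
Qed.

Lemma shiftD S l x y : linear_op S -> dom S x -> dom S y ->
  shift_app S l (x +v y) = shift_app S l x +v shift_app S l y.
Proof.
  intros. unfold shift_app. rewrite lin_appD, kscalD by auto. apply ksub_addsub.
Qed.

Lemma shiftZ S l a x : linear_op S -> dom S x ->
  shift_app S l (kscal a x) = kscal a (shift_app S l x).
Proof.
  intros. unfold shift_app. rewrite lin_appZ, kscalD, kscalN, !kscal_mul by auto.
  f_equal. f_equal. f_equal. destruct a, l; ceq.
Qed.

Lemma shiftN S l x : linear_op S -> dom S x -> shift_app S l (-v x) = -v shift_app S l x.
Proof. intros. rewrite !kopp_scal. apply shiftZ; auto. Qed.

Lemma shiftB S l x y : linear_op S -> dom S x -> dom S y ->
  shift_app S l (x +v -v y) = shift_app S l x +v -v shift_app S l y.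
Proof. intros. rewrite shiftD, shiftN; auto. apply lin_domN; auto. Qed.

Lemma shift0 S l : linear_op S -> shift_app S l kz = kz.
Proof. intros. unfold shift_app. rewrite lin_app0, kscalz, kNr; auto. Qed.

Lemma shift_change S l m x :
  shift_app S m x = shift_app S l x +v kscal (Csub l m) x.
Proof.
  unfold shift_app. rewrite kscalB. rewrite <- kA. f_equal.
  rewrite kA, kNl, k0l. reflexivity.
Qed.

Definition resolv S (l : Cx) (y : K) : K :=
  epsilon (inhabits kz) (fun x => dom S x /\ shift_app S l x = y).

Section Res.
Variables (S : Op K) (l : Cx).
Hypothesis HS : linear_op S.
Hypothesis Hr : in_resolvent S l.

Lemma R_spec y : dom S (resolv S l y) /\ shift_app S l (resolv S l y) = y.
Proof.
  unfold resolv. apply (epsilon_spec (inhabits kz) (fun x => dom S x /\ shift_app S l x = y)).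
  destruct Hr as [H _]. destruct (H y) as [x [Hx _]]. exists x; exact Hx.
Qed.

Lemma R_dom y : dom S (resolv S l y).
Proof. apply R_spec. Qed.
Lemma R_shift y : shift_app S l (resolv S l y) = y.
Proof. apply R_spec. Qed.

Lemma R_uniq x y : dom S x -> shift_app S l x = y -> resolv S l y = x.
Proof.
  intros Dx Hx. destruct Hr as [H _]. destruct (H y) as [x0 [_ Hu]].
  rewrite <- (Hu x (conj Dx Hx)). symmetry. apply Hu. apply R_spec.
Qed.

Lemma R_add y1 y2 : resolv S l (y1 +v y2) = resolv S l y1 +v resolv S l y2.
Proof. apply R_uniq. apply lin_domD; auto using R_dom. rewrite shiftD, !R_shift; auto using R_dom. Qed.

Lemma R_scal a y : resolv S l (kscal a y) = kscal a (resolv S l y).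
Proof. apply R_uniq. apply lin_domZ; auto using R_dom. rewrite shiftZ, !R_shift; auto using R_dom. Qed.

Lemma R_opp y : resolv S l (-v y) = -v resolv S l y.
Proof. rewrite !kopp_scal. apply R_scal. Qed.

Lemma R_sub y1 y2 : resolv S l (y1 +v -v y2) = resolv S l y1 +v -v resolv S l y2.
Proof. rewrite R_add, R_opp. reflexivity. Qed.

Lemma R_bounded : exists N, 0 <= N /\ forall y, knorm (resolv S l y) <= N * knorm y.
Proof.
  destruct Hr as [_ [M HM]]. exists (Rabs M). split. apply Rabs_pos.
  intros y. specialize (HM (resolv S l y) (R_dom y)). rewrite R_shift in HM.
  pose proof (knorm_nonneg K y). pose proof (Rle_abs M). nra.
Qed.

Lemma resnorm_lub : is_lub (fun r => exists x, dom S x /\ knorm (shift_app S l x) <= 1 /\ r = knorm x)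
  (resnorm S l).
Proof.
  apply sup_of_lub.
  - exists 0. exists kz. split. apply lin_dom0; auto. rewrite shift0, knorm0; auto. split; lra.
  - destruct R_bounded as (N & HN & HB). exists N. intros r (x & Dx & Hx & ->).
    rewrite <- (R_uniq x (shift_app S l x)) by auto. eapply Rle_trans; [apply HB|]. nra.
Qed.

Lemma resnorm_nonneg : 0 <= resnorm S l.
Proof.
  destruct resnorm_lub as [H _]. apply H. exists kz. split. apply lin_dom0; auto.
  rewrite shift0, knorm0; auto. split; lra.
Qed.

Lemma R_resnorm y : knorm (resolv S l y) <= resnorm S l * knorm y.
Proof.
  destruct (Req_dec (knorm y) 0) as [h|h].
  - apply knorm_eq0 in h. subst y. rewrite (R_uniq kz kz); [rewrite knorm0; lra | apply lin_dom0; auto | apply shift0; auto].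
  - pose proof (knorm_nonneg K y). assert (0 < knorm y) by lra.
    destruct resnorm_lub as [H1 _].
    set (t := / knorm y).
    assert (Ht : 0 < t) by (apply Rinv_0_lt_compat; auto).
    assert (knorm (kscal (rc t) (resolv S l y)) <= resnorm S l).
    { apply H1. exists (kscal (rc t) (resolv S l y)). split. apply lin_domZ; auto using R_dom.
      split; auto. rewrite shiftZ, R_shift, knorm_rc, Rabs_pos_eq by (auto using R_dom; lra).
      unfold t. rewrite Rinv_l by lra. lra. }
    rewrite knorm_rc, Rabs_pos_eq in H2 by lra. unfold t in H2.
    apply (Rmult_le_compat_r (knorm y)) in H2; [|lra].
    rewrite Rmult_comm, <- Rmult_assoc, Rinv_r, Rmult_1_l in H2 by lra. lra.
Qed.

End Res.

Lemma resnorm_le S l Bd : linear_op S -> in_resolvent S l -> 0 <= Bd ->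
  (forall x, dom S x -> knorm x <= Bd * knorm (shift_app S l x)) -> resnorm S l <= Bd.
Proof.
  intros HS Hr HB H. destruct (resnorm_lub S l HS Hr) as [_ H2]. apply H2.
  intros r (x & Dx & Hx & ->). specialize (H x Dx). nra.
Qed.

Lemma R_ident S l m y : linear_op S -> in_resolvent S l -> in_resolvent S m ->
  resolv S l y = resolv S m (y +v kscal (Csub l m) (resolv S l y)).
Proof.
  intros HS Hl Hm. symmetry. apply R_uniq; auto. apply R_dom; auto.
  rewrite (shift_change S l m), R_shift; auto.
Qed.

Lemma R_ident2 S l m y : linear_op S -> in_resolvent S l -> in_resolvent S m ->
  resolv S l y = resolv S m y +v kscal (Csub l m) (resolv S l (resolv S m y)).
Proof.
  intros HS Hl Hm. apply R_uniq; auto.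
  - apply lin_domD; auto. apply R_dom; auto. apply lin_domZ; auto. apply R_dom; auto.
  - rewrite shiftD, shiftZ, R_shift; auto; try (apply R_dom; auto); try (apply lin_domZ; auto; apply R_dom; auto).
    rewrite (shift_change S m l), R_shift; auto.
    rewrite <- kA. rewrite <- kscal_adds. replace (Cadd (Csub m l) (Csub l m)) with C0 by ceq.
    rewrite kscal0, k0r. reflexivity.
Qed.

Lemma comp_bound S l nu (G : K -> K) c N : linear_op S -> in_resolvent S l -> in_resolvent S nu ->
  0 <= c -> 0 <= N ->
  (forall y, knorm (G (resolv S nu y)) <= c * knorm y) ->
  (forall y, knorm (resolv S l y) <= N * knorm y) ->
  forall y, knorm (G (resolv S l y)) <= c * (1 + Cabs (Csub l nu) * N) * knorm y.
Proof.
  intros HS Hl Hn Hc HN HG HR y. rewrite (R_ident S l nu y); auto.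
  eapply Rle_trans; [apply HG|].
  pose proof (knorm_triangle K y (kscal (Csub l nu) (resolv S l y))).
  rewrite knorm_scal in H. specialize (HR y). pose proof (Cabs_nonneg (Csub l nu)).
  pose proof (knorm_nonneg K y).
  assert (Cabs (Csub l nu) * knorm (resolv S l y) <= Cabs (Csub l nu) * (N * knorm y)) by
    (apply Rmult_le_compat_l; auto).
  assert (knorm (y +v kscal (Csub l nu) (resolv S l y)) <= (1 + Cabs (Csub l nu) * N) * knorm y) by nra.
  replace (c * (1 + Cabs (Csub l nu) * N) * knorm y) with (c * ((1 + Cabs (Csub l nu) * N) * knorm y)) by ring.
  apply Rmult_le_compat_l; auto.
Qed.

End Ops.
Arguments resolv {K} S l y.

Section Alg.
Variable K : KreinSpace.
Local Notation kz := (@kzero K).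

Lemma kalg3 (x y : K) : x +v -v (x +v -v y) = y.
Proof. rewrite ksub_opp, (kswap K x y), kNr, k0r. reflexivity. Qed.

Lemma kscal_inv l (x : K) : l <> C0 -> kscal l (kscal (Cinv l) x) = x.
Proof. intros. rewrite kscal_mul, Cmul_inv, kscal_1; auto. Qed.
Lemma kscal_inv' l (x : K) : l <> C0 -> kscal (Cinv l) (kscal l x) = x.
Proof. intros. rewrite kscal_mul, Cinv_mul, kscal_1; auto. Qed.

Variables A B : Op K.
Hypothesis HA : linear_op A.
Hypothesis HB : linear_op B.

Lemma construct l w : l <> C0 -> in_resolvent (opmul B A) l -> dom (opmul A B) w ->
  dom (opmul A B) (kscal (Cinv l) (app A (resolv (opmul B A) l (app B w)) +v -v w)) /\
  shift_app (opmul A B) l (kscal (Cinv l) (app A (resolv (opmul B A) l (app B w)) +v -v w)) = w.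
Proof.
  intros Hl Hr [Dw1 Dw2].
  pose proof (opmul_linear K B A HB HA) as HP.
  set (u := resolv (opmul B A) l (app B w)).
  destruct (R_dom K _ l Hr (app B w)) as [Du1 Du2]. fold u in Du1, Du2.
  pose proof (R_shift K _ l Hr (app B w)) as Su. fold u in Su.
  unfold shift_app in Su; simpl in Su.
  set (v := app A u) in *.
  assert (Bz : app B (kscal (Cinv l) (v +v -v w)) = u).
  { rewrite lin_appZ, lin_appB; auto. rewrite <- Su, kalg3. apply kscal_inv'; auto.
    apply lin_domB; auto. }
  assert (Dz : dom B (kscal (Cinv l) (v +v -v w))) by (apply lin_domZ; auto; apply lin_domB; auto).
  split.
  - split; auto. simpl. rewrite Bz. auto.
  - unfold shift_app. simpl. rewrite Bz. fold v. rewrite kscal_inv by auto. apply kalg3.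
Qed.

Lemma inj_Q l x : l <> C0 -> in_resolvent (opmul B A) l -> dom (opmul A B) x ->
  shift_app (opmul A B) l x = kz -> x = kz.
Proof.
  intros Hl Hr [Dx1 Dx2] Hs.
  pose proof (opmul_linear K B A HB HA) as HP.
  unfold shift_app in Hs; simpl in Hs. apply ksub_eq in Hs.
  assert (DP : dom (opmul B A) (app B x)).
  { split; auto. rewrite Hs. apply lin_domZ; auto. }
  assert (SP : shift_app (opmul B A) l (app B x) = kz).
  { unfold shift_app; simpl. rewrite Hs, lin_appZ, kNr; auto. }
  assert (u0 : app B x = kz).
  { rewrite <- (R_uniq K _ l Hr _ _ DP SP). apply R_uniq; auto. apply lin_dom0; auto. apply shift0; auto. }
  rewrite u0, lin_app0 in Hs by auto.
  rewrite <- (kscal_inv' l x Hl), <- Hs. apply kscalz.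
Qed.

Lemma Q_uniq l x1 x2 : l <> C0 -> in_resolvent (opmul B A) l -> dom (opmul A B) x1 -> dom (opmul A B) x2 ->
  shift_app (opmul A B) l x1 = shift_app (opmul A B) l x2 -> x1 = x2.
Proof.
  intros Hl Hr D1 D2 H. pose proof (opmul_linear K A B HA HB) as HQ.
  apply ksub_eq. apply (inj_Q l); auto. apply lin_domB; auto.
  rewrite shiftB, H, kNr; auto.
Qed.

Lemma z_bound l w a : l <> C0 -> 0 <= a ->
  (forall y, knorm (app A (resolv (opmul B A) l y)) <= a * knorm y) ->
  knorm (kscal (Cinv l) (app A (resolv (opmul B A) l (app B w)) +v -v w)) <=
    / Cabs l * (a * knorm (app B w) + knorm w).
Proof.
  intros Hl Ha H. rewrite knorm_scal, Cabs_inv by auto.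
  pose proof (Cabs_pos l Hl). apply Rmult_le_compat_l. left; apply Rinv_0_lt_compat; auto.
  eapply Rle_trans; [apply knorm_sub_le|]. specialize (H (app B w)). lra.
Qed.

Lemma transfer l nu a c1 N : l <> C0 -> in_resolvent (opmul B A) l -> in_resolvent (opmul A B) nu ->
  0 <= a -> 0 <= c1 -> 0 <= N ->
  (forall y, knorm (app A (resolv (opmul B A) l y)) <= a * knorm y) ->
  (forall y, knorm (app B (resolv (opmul A B) nu y)) <= c1 * knorm y) ->
  (forall y, knorm (resolv (opmul A B) nu y) <= N * knorm y) ->
  in_resolvent (opmul A B) l.
Proof.
  intros Hl Hr Hn Ha Hc HN HAb HBb HNb.
  pose proof (opmul_linear K A B HA HB) as HQ.
  set (w := fun y => resolv (opmul A B) nu y).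
  set (z := fun y => kscal (Cinv l) (app A (resolv (opmul B A) l (app B (w y))) +v -v w y)).
  set (sol := fun y => w y +v kscal (Csub l nu) (z y)).
  assert (Dw : forall y, dom (opmul A B) (w y)) by (intros; apply R_dom; auto).
  assert (Hz : forall y, dom (opmul A B) (z y) /\ shift_app (opmul A B) l (z y) = w y)
    by (intros; apply construct; auto).
  assert (Hsol : forall y, dom (opmul A B) (sol y) /\ shift_app (opmul A B) l (sol y) = y).
  { intros y. destruct (Hz y) as [Dz Sz]. split.
    - apply lin_domD; auto. apply lin_domZ; auto.
    - unfold sol. rewrite shiftD, shiftZ, Sz; auto; [|apply lin_domZ; auto].
      rewrite <- shift_change. apply R_shift; auto. }
  split.
  - intros y. exists (sol y). split; auto. intros x' [D' S']. apply (Q_uniq l); auto.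
    + apply Hsol.
    + rewrite S'. apply Hsol.
  - exists (N + Cabs (Csub l nu) * (/ Cabs l * (a * c1 + N))).
    intros x Dx. set (y := shift_app (opmul A B) l x).
    assert (x = sol y).
    { apply (Q_uniq l); auto. apply Hsol. destruct (Hsol y) as [_ ->]. reflexivity. }
    rewrite H. unfold sol. eapply Rle_trans; [apply knorm_triangle|].
    rewrite knorm_scal. pose proof (Cabs_nonneg (Csub l nu)). pose proof (Cabs_pos l Hl).
    pose proof (z_bound l (w y) a Hl Ha HAb) as Zb. fold (z y) in Zb.
    pose proof (HBb y) as B1. pose proof (HNb y) as N1. fold (w y) in B1, N1.
    pose proof (knorm_nonneg K y).
    assert (a * knorm (app B (w y)) + knorm (w y) <= (a * c1 + N) * knorm y).
    { assert (a * knorm (app B (w y)) <= a * (c1 * knorm y)) by (apply Rmult_le_compat_l; auto). nra. }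
    assert (0 < / Cabs l) by (apply Rinv_0_lt_compat; auto).
    assert (knorm (z y) <= / Cabs l * ((a * c1 + N) * knorm y)).
    { eapply Rle_trans; [apply Zb|]. apply Rmult_le_compat_l; lra. }
    assert (Cabs (Csub l nu) * knorm (z y) <= Cabs (Csub l nu) * (/ Cabs l * ((a * c1 + N) * knorm y)))
      by (apply Rmult_le_compat_l; auto).
    nra.
Qed.

End Alg.

Lemma estimate (K : KreinSpace) (A B : Op K) l m a b N2 : linear_op A -> linear_op B ->
  l <> C0 -> in_resolvent (opmul A B) l -> in_resolvent (opmul B A) l ->
  in_resolvent (opmul B A) m -> 0 <= a -> 0 <= b -> 0 <= N2 ->
  (forall y, knorm (app B (resolv (opmul A B) l y)) <= b * knorm y) ->
  (forall y, knorm (app A (resolv (opmul B A) m y)) <= a * knorm y) ->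
  (forall y, knorm (resolv (opmul B A) m y) <= N2 * knorm y) ->
  forall x, dom (opmul B A) x ->
  knorm x <= (N2 + Cabs (Csub l m) * (/ Cabs l * (b * a + N2))) * knorm (shift_app (opmul B A) l x).
Proof.
  intros HA HB Hl HQl HPl HPm Ha Hb HN HBb HAb HNb x Dx.
  pose proof (opmul_linear K B A HB HA) as HP.
  set (y := shift_app (opmul B A) l x).
  rewrite <- (R_uniq K _ l HPl x y Dx eq_refl).
  rewrite (R_ident2 K _ l m y HP HPl HPm).
  set (w := resolv (opmul B A) m y).
  assert (Dw : dom (opmul B A) w) by (apply R_dom; auto).
  destruct (construct K B A HB HA l w Hl HQl Dw) as [Dz Sz].
  rewrite (R_uniq K _ l HPl _ _ Dz Sz).
  pose proof (z_bound K B A l w b Hl Hb HBb) as Zb.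
  set (z := kscal (Cinv l) (app B (resolv (opmul A B) l (app A w)) +v -v w)) in *.
  eapply Rle_trans; [apply knorm_triangle|].
  rewrite knorm_scal. pose proof (Cabs_nonneg (Csub l m)). pose proof (Cabs_pos l Hl).
  pose proof (HAb y) as A1. pose proof (HNb y) as N1. fold w in A1, N1.
  pose proof (knorm_nonneg K y).
  assert (b * knorm (app A w) + knorm w <= (b * a + N2) * knorm y).
  { assert (b * knorm (app A w) <= b * (a * knorm y)) by (apply Rmult_le_compat_l; auto). nra. }
  assert (0 < / Cabs l) by (apply Rinv_0_lt_compat; auto).
  assert (knorm z <= / Cabs l * ((b * a + N2) * knorm y)).
  { eapply Rle_trans; [apply Zb|]. apply Rmult_le_compat_l; lra. }
  assert (Cabs (Csub l m) * knorm z <= Cabs (Csub l m) * (/ Cabs l * ((b * a + N2) * knorm y)))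
    by (apply Rmult_le_compat_l; auto).
  nra.
Qed.

Lemma comp_closed_bounded (K : KreinSpace) (S G : Op K) l :
  linear_op S -> closed_op S -> in_resolvent G l -> linear_op G ->
  (forall y, dom S (resolv G l y)) ->
  exists c, 0 <= c /\ forall y, knorm (app S (resolv G l y)) <= c * knorm y.
Proof.
  intros HS HSc Hr HG Hd.
  destruct (R_bounded K G l Hr) as (N & HN & HNb).
  destruct (closed_graph K (fun y => app S (resolv G l y))) as [M HM].
  - intros x y. rewrite R_add by auto. apply lin_appD; auto.
  - intros t x. rewrite R_scal by auto. apply lin_appZ; auto.
  - intros u x y Hu Hy.
    assert (Hc : conv_wrt kdist (fun n => resolv G l (u n)) (resolv G l x)).
    { intros eps He. destruct (Hu (eps / (N + 1))) as [n0 Hn0]. apply Rdiv_lt_0_compat; lra.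
      exists n0. intros n Hn. specialize (Hn0 n Hn). unfold kdist. rewrite <- R_sub by auto.
      eapply Rle_lt_trans; [apply HNb|].
      pose proof (knorm_nonneg K (u n +v -v x)).
      apply Rle_lt_trans with ((N+1) * knorm (u n +v -v x)). nra.
      apply (Rmult_lt_compat_l (N+1)) in Hn0; [|lra].
      replace ((N + 1) * (eps / (N + 1))) with eps in Hn0 by (field; lra). exact Hn0. }
    destruct (HSc (fun n => resolv G l (u n)) (resolv G l x) y (fun n => Hd (u n)) Hc Hy). auto.
  - exists (Rabs M). split. apply Rabs_pos. intros y. specialize (HM y).
    pose proof (knorm_nonneg K y). pose proof (Rle_abs M). nra.
Qed.

Lemma final_ineq (L Mm D N1 N2 c0 c1 p0 p1 a b : R) :
  0 < L -> 0 <= Mm -> 0 <= D -> 1 <= N1 -> 1 <= N2 -> 0 <= c0 -> 0 <= c1 -> 0 <= p0 -> 0 <= p1 ->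
  L <= Mm + D -> 0 <= a -> a <= c0 * N2 * (1+p0) * (2+Mm) -> 0 <= b -> b <= c1 * N1 * (1+p1) * (2+L) ->
  N2 + D * (/ L * (b * a + N2)) <=
    (2 + c0 * c1 * (1+p0) * (1+p1)) * N1 * N2 / L * (Mm + D * (2+L) * (2+Mm)).
Proof.
  intros. set (P := (2+L)*(2+Mm)). set (S := Mm + D * P).
  set (Q := c0 * c1 * (1+p0) * (1+p1)).
  assert (HP : 4 <= P) by (unfold P; nra).
  assert (HS : L <= S) by (unfold S; nra).
  assert (HQ : 0 <= Q) by (unfold Q; repeat apply Rmult_le_pos; lra).
  assert (Hba : b * a <= Q * N1 * N2 * P).
  { apply Rle_trans with ((c1 * N1 * (1+p1) * (2+L)) * (c0 * N2 * (1+p0) * (2+Mm))).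
    apply Rmult_le_compat; auto. unfold Q, P. nra. }
  assert (HN12 : 1 <= N1 * N2) by nra.
  assert (E : (2 + Q) * N1 * N2 / L * (Mm + D * (2+L) * (2+Mm)) = / L * ((2 + Q) * N1 * N2 * S)).
  { unfold S, P. field. lra. }
  fold Q. rewrite E.
  replace (N2 + D * (/ L * (b * a + N2))) with (/ L * (N2 * L + D * (b * a + N2))) by (field; lra).
  apply Rmult_le_compat_l. left; apply Rinv_0_lt_compat; auto.
  assert (HS0 : 0 <= S) by lra.
  assert (HNS : N2 * S <= N1 * N2 * S).
  { assert (0 <= (N1 - 1) * (N2 * S)) by (apply Rmult_le_pos; [lra| apply Rmult_le_pos; lra]). nra. }
  assert (T1 : N2 * L <= N1 * N2 * S).
  { assert (N2 * L <= N2 * S) by (apply Rmult_le_compat_l; lra). lra. }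
  assert (T2 : D * N2 <= N1 * N2 * S).
  { assert (D <= S) by (unfold S; nra). assert (D * N2 <= S * N2) by (apply Rmult_le_compat_r; lra). lra. }
  assert (T3 : D * (b * a) <= Q * N1 * N2 * S).
  { apply Rle_trans with (D * (Q * N1 * N2 * P)). apply Rmult_le_compat_l; auto.
    assert (D * P <= S) by (unfold S; lra).
    assert (0 <= Q * N1 * N2) by (repeat apply Rmult_le_pos; lra). nra. }
  nra.
Qed.

Theorem theorem2p2 (K : KreinSpace) (T : Op K) :
  linear_op T -> closed_op T -> densely_defined T ->
  (exists z, in_resolvent (opmul (kadj T) T) z) ->
  (exists z, in_resolvent (opmul T (kadj T)) z) ->
  (forall z, z <> C0 ->
     (in_spectrum (opmul (kadj T) T) z <-> in_spectrum (opmul T (kadj T)) z)) /\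
  (exists C, 0 < C /\
     forall l m : Cx,
       in_resolvent (opmul (kadj T) T) l -> in_resolvent (opmul (kadj T) T) m ->
       l <> C0 ->
       resnorm (opmul (kadj T) T) l <=
         C * Rmax 1 (resnorm (opmul T (kadj T)) l) * Rmax 1 (resnorm (opmul (kadj T) T) m)
           / Cabs l
           * (Cabs m + Cabs (Csub l m) * (2 + Cabs l) * (2 + Cabs m))).
Proof.
  intros HT HTc HTd [nu0 H0] [nu1 H1].
  pose proof (adj_linear K T HTd) as HTs. pose proof (adj_closed K T HTd) as HTsc.
  set (Ts := kadj T) in *.
  pose proof (opmul_linear K Ts T HTs HT) as HP.
  pose proof (opmul_linear K T Ts HT HTs) as HQ.
  destruct (comp_closed_bounded K T (opmul Ts T) nu0 HT HTc H0 HP) as (c0 & Hc0 & Hc0b).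
  { intros y. apply (R_dom K _ _ H0). }
  destruct (comp_closed_bounded K Ts (opmul T Ts) nu1 HTs HTsc H1 HQ) as (c1 & Hc1 & Hc1b).
  { intros y. apply (R_dom K _ _ H1). }
  destruct (R_bounded K _ _ H0) as (N0 & HN0 & HN0b).
  destruct (R_bounded K _ _ H1) as (N1 & HN1 & HN1b).
  assert (PtoQ : forall z, z <> C0 -> in_resolvent (opmul Ts T) z -> in_resolvent (opmul T Ts) z).
  { intros z Hz Hr. destruct (R_bounded K _ _ Hr) as (Nz & HNz & HNzb).
    apply (transfer K T Ts HT HTs z nu1 (c0 * (1 + Cabs (Csub z nu0) * Nz)) c1 N1); auto.
    all: try (pose proof (Cabs_nonneg (Csub z nu0)); apply Rmult_le_pos; nra).
    all: apply (comp_bound K _ z nu0 (app T) c0 Nz); auto. }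
  assert (QtoP : forall z, z <> C0 -> in_resolvent (opmul T Ts) z -> in_resolvent (opmul Ts T) z).
  { intros z Hz Hr. destruct (R_bounded K _ _ Hr) as (Nz & HNz & HNzb).
    apply (transfer K Ts T HTs HT z nu0 (c1 * (1 + Cabs (Csub z nu1) * Nz)) c0 N0); auto.
    all: try (pose proof (Cabs_nonneg (Csub z nu1)); apply Rmult_le_pos; nra).
    all: apply (comp_bound K _ z nu1 (app Ts) c1 Nz); auto. }
  split.
  - intros z Hz. unfold in_spectrum. split; intros Hn Hr; apply Hn; auto.
  - exists (2 + c0 * c1 * (1 + Cabs nu0) * (1 + Cabs nu1)). split.
    { pose proof (Cabs_nonneg nu0). pose proof (Cabs_nonneg nu1).
      assert (0 <= c0 * c1 * (1 + Cabs nu0) * (1 + Cabs nu1)) by (repeat apply Rmult_le_pos; lra). lra. }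
    intros l m Hl Hm Hl0.
    pose proof (PtoQ l Hl0 Hl) as HQl.
    set (M1 := Rmax 1 (resnorm (opmul T Ts) l)).
    set (M2 := Rmax 1 (resnorm (opmul Ts T) m)).
    assert (HM1 : 1 <= M1) by apply Rmax_l. assert (HM2 : 1 <= M2) by apply Rmax_l.
    assert (HR1 : forall y, knorm (resolv (opmul T Ts) l y) <= M1 * knorm y).
    { intros y. eapply Rle_trans; [apply R_resnorm; auto|]. apply Rmult_le_compat_r.
      apply knorm_nonneg. apply Rmax_r. }
    assert (HR2 : forall y, knorm (resolv (opmul Ts T) m y) <= M2 * knorm y).
    { intros y. eapply Rle_trans; [apply R_resnorm; auto|]. apply Rmult_le_compat_r.
      apply knorm_nonneg. apply Rmax_r. }
    set (a := c0 * (1 + Cabs (Csub m nu0) * M2)).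
    set (b := c1 * (1 + Cabs (Csub l nu1) * M1)).
    pose proof (Cabs_nonneg (Csub m nu0)). pose proof (Cabs_nonneg (Csub l nu1)).
    assert (Ha : 0 <= a) by (unfold a; apply Rmult_le_pos; nra).
    assert (Hb : 0 <= b) by (unfold b; apply Rmult_le_pos; nra).
    assert (HAb : forall y, knorm (app T (resolv (opmul Ts T) m y)) <= a * knorm y).
    { apply (comp_bound K _ m nu0 (app T) c0 M2); auto; lra. }
    assert (HBb : forall y, knorm (app Ts (resolv (opmul T Ts) l y)) <= b * knorm y).
    { apply (comp_bound K _ l nu1 (app Ts) c1 M1); auto; lra. }
    pose proof (estimate K T Ts l m a b M2 HT HTs Hl0 HQl Hl Hm Ha Hb ltac:(lra) HBb HAb HR2) as Est.
    pose proof (Cabs_pos l Hl0) as HL.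
    pose proof (Cabs_nonneg (Csub l m)).
    eapply Rle_trans.
    { apply (resnorm_le K _ l (M2 + Cabs (Csub l m) * (/ Cabs l * (b * a + M2))) HP Hl).
      - assert (0 <= / Cabs l * (b * a + M2)).
        { apply Rmult_le_pos. left; apply Rinv_0_lt_compat; auto. assert (0 <= b * a) by (apply Rmult_le_pos; auto). lra. }
        assert (0 <= Cabs (Csub l m) * (/ Cabs l * (b * a + M2))) by (apply Rmult_le_pos; auto). lra.
      - exact Est. }
    pose proof (Cabs_nonneg m). pose proof (Cabs_nonneg nu0). pose proof (Cabs_nonneg nu1).
    apply final_ineq; auto; try lra.
    + replace (Cabs l) with (Cabs (Cadd m (Csub l m))) by (f_equal; destruct l, m; ceq).
      apply Cabs_triangle.
    + pose proof (Cabs_sub_le m nu0). unfold a.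
      replace (c0 * M2 * (1 + Cabs nu0) * (2 + Cabs m)) with (c0 * (M2 * (1 + Cabs nu0) * (2 + Cabs m))) by ring.
      apply Rmult_le_compat_l; auto.
      assert (Cabs (Csub m nu0) * M2 <= (Cabs m + Cabs nu0) * M2) by (apply Rmult_le_compat_r; lra).
      assert (1 + Cabs m + Cabs nu0 <= (1 + Cabs nu0) * (2 + Cabs m)) by nra.
      assert (M2 * (1 + Cabs m + Cabs nu0) <= M2 * ((1 + Cabs nu0) * (2 + Cabs m))) by (apply Rmult_le_compat_l; lra).
      nra.
    + pose proof (Cabs_sub_le l nu1). unfold b.
      replace (c1 * M1 * (1 + Cabs nu1) * (2 + Cabs l)) with (c1 * (M1 * (1 + Cabs nu1) * (2 + Cabs l))) by ring.
      apply Rmult_le_compat_l; auto.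
      assert (Cabs (Csub l nu1) * M1 <= (Cabs l + Cabs nu1) * M1) by (apply Rmult_le_compat_r; lra).
      assert (1 + Cabs l + Cabs nu1 <= (1 + Cabs nu1) * (2 + Cabs l)) by nra.
      assert (M1 * (1 + Cabs l + Cabs nu1) <= M1 * ((1 + Cabs nu1) * (2 + Cabs l))) by (apply Rmult_le_compat_l; lra).
      nra.
Qed.
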